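(* Let $\Bbbk$ be a field of characteristic zero and let $n,d$ be integers with $n \geq 5, d \geq 4$, or $n\geq 6, d\geq 3$, or $n \geq 7, d \geq 2$. Let $S=\Bbbk[x_1,\ldots,x_n]$. Then there exists an artinian monomial ideal $I\subset S$ minimally generated by $2n-2$ elements of degree $d$ such that $S/I$ fails the WLP in degree $2d-2$.
   Context: For a monomial ideal $I$, $A=S/I$ fails the WLP in degree $i$ if $\times(x_1+\cdots+x_n): A_i\to A_{i+1}$ is neither injective nor surjective. *)

(* Defs.v *)
From HB Require Import structures.
From mathcomp Require Import all_boot all_order all_algebra.
From mathcomp Require Import mpoly.
Set Implicit Arguments. Unset Strict Implicit. Unset Printing Implicit Defensive.
Import Order.TTheory GRing.Theory.
Local Open Scope ring_scope.

Section MonomialIdeals.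
Variables (F : fieldType) (n : nat).

Definition in_mon_ideal (gens : seq 'X_{1..n}) (f : {mpoly F[n]}) : Prop :=
  exists q : seq {mpoly F[n]},
    f = \sum_(j < size gens) q`_j * 'X_[nth 0%MM gens j].

Definition drop_at (T : Type) (s : seq T) (j : nat) : seq T :=
  take j s ++ drop j.+1 s.

Definition minimal_gens (gens : seq 'X_{1..n}) : Prop :=
  forall j : 'I_(size gens), ~ in_mon_ideal (drop_at gens j) 'X_[nth 0%MM gens j].

(* S/I is artinian: I contains a power of the maximal ideal (x_1,..,x_n),
   i.e. all monomials of large degree. *)
Definition artinian_quot (gens : seq 'X_{1..n}) : Prop :=
  exists N : nat, forall m : 'X_{1..n}, (N <= mdeg m)%N ->
    in_mon_ideal gens 'X_[m].

Definition lin_form : {mpoly F[n]} := \sum_(i < n) 'X_i.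

(* x l : A_i -> A_{i+1} injective, A = S/I, A_i = S_i/I_i *)
Definition mult_injective_in (gens : seq 'X_{1..n}) (i : nat) : Prop :=
  forall f : {mpoly F[n]}, f \is i.-homog ->
    in_mon_ideal gens (lin_form * f) -> in_mon_ideal gens f.

(* x l : A_i -> A_{i+1} surjective *)
Definition mult_surjective_in (gens : seq 'X_{1..n}) (i : nat) : Prop :=
  forall g : {mpoly F[n]}, g \is i.+1.-homog ->
    exists2 f : {mpoly F[n]}, f \is i.-homog &
      in_mon_ideal gens (g - lin_form * f).

Definition fails_WLP_in (gens : seq 'X_{1..n}) (i : nat) : Prop :=
  ~ mult_injective_in gens i /\ ~ mult_surjective_in gens i.

End MonomialIdeals.

(* Main.v *)
Require Import Defs.
From HB Require Import structures.
From mathcomp Require Import all_boot all_order all_algebra.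
From mathcomp Require Import mpoly.
From mathcomp Require Import zify.
Set Implicit Arguments. Unset Strict Implicit. Unset Printing Implicit Defensive.
Import Order.TTheory GRing.Theory.
Local Open Scope ring_scope.

Section Gen.
Variables (F : fieldType) (n : nat).
Implicit Types (gens : seq 'X_{1..n}) (f g h p q : {mpoly F[n]}) (M m : 'X_{1..n}).

Definition Iin gens f := exists q : 'I_(size gens) -> {mpoly F[n]},
  f = \sum_(j < size gens) q j * 'X_[nth 0%MM gens j].

Lemma IinP gens f : in_mon_ideal gens f <-> Iin gens f.
Proof.
split=> [[q ->]|[q ->]]; first by exists (fun j => q`_j).
exists [seq q j | j <- enum 'I_(size gens)]; apply: eq_bigr => j _.
by rewrite (nth_map j) ?size_enum_ord // nth_ord_enum.
Qed.

Lemma Iin0 gens : Iin gens 0.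
Proof. by exists (fun _ => 0); rewrite big1 // => j _; rewrite mul0r. Qed.

Lemma IinD gens f g : Iin gens f -> Iin gens g -> Iin gens (f + g).
Proof.
move=> [q1 ->] [q2 ->]; exists (fun j => q1 j + q2 j).
by rewrite -big_split; apply: eq_bigr => j _; rewrite mulrDl.
Qed.

Lemma IinZ gens c f : Iin gens f -> Iin gens (c *: f).
Proof.
move=> [q ->]; exists (fun j => c *: q j).
by rewrite scaler_sumr; apply: eq_bigr => j _; rewrite scalerAl.
Qed.

Lemma IinX gens (gm M : 'X_{1..n}) : gm \in gens -> (gm <= M)%MM -> Iin gens 'X_[M].
Proof.
move=> gin le; have hj : (index gm gens < size gens)%N by rewrite index_mem.
pose j0 : 'I_(size gens) := Ordinal hj.
exists (fun j => if j == j0 then 'X_[M - gm] else 0).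
rewrite (bigD1 j0) //= eqxx big1 ?addr0 => [|j /negPf ->]; last by rewrite mul0r.
by rewrite nth_index // -mpolyXD submK.
Qed.

Lemma Iin_sum gens (I : Type) (r : seq I) (P : pred I) (Ff : I -> {mpoly F[n]}) :
  (forall i, P i -> Iin gens (Ff i)) -> Iin gens (\sum_(i <- r | P i) Ff i).
Proof.
move=> H; elim/big_rec: _ => [|i x Pi Ix]; first exact: Iin0.
by apply: IinD => //; apply: H.
Qed.

Lemma Iin_supp gens f :
  (forall M, M \in msupp f -> exists2 gm, gm \in gens & (gm <= M)%MM) -> Iin gens f.
Proof.
move=> H; rewrite (mpolyE f) big_seq; apply: Iin_sum => M /H [gm gin le].
by apply: IinZ; apply: IinX le.
Qed.

Lemma coefMX0 q (gm M : 'X_{1..n}) : ~~ (gm <= M)%MM -> (q * 'X_[gm])@_M = 0.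
Proof.
move=> nle; apply/eqP; rewrite mcoeff_eq0 (perm_mem (msuppMX q gm)).
apply/mapP => [[m' _ eM]]; move: nle; rewrite eM; by rewrite lem_addr.
Qed.

Lemma Iin_coef0 gens f M : Iin gens f ->
  (forall gm, gm \in gens -> ~~ (gm <= M)%MM) -> f@_M = 0.
Proof.
move=> [q ->] H; rewrite raddf_sum /= big1 // => j _.
apply: coefMX0; apply: H; apply: mem_nth; exact: ltn_ord.
Qed.

Definition mfact M := (\prod_(i < n) (M i)`!)%N.

Lemma mfactU M i : mfact (M + U_(i))%MM = (mfact M * (M i).+1)%N.
Proof.
rewrite /mfact (bigD1 i) //= [in RHS](bigD1 i) //= mnmDE mnm1E eqxx addn1 factS.
rewrite [RHS]mulnC mulnA; congr (_ * _)%N.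
apply: eq_bigr => j /negPf ji; by rewrite mnmDE mnm1E eq_sym ji addn0.
Qed.

Definition Dsum p := \sum_(i < n) p^`M(i).

Lemma DsumD p q : Dsum (p + q) = Dsum p + Dsum q.
Proof. by rewrite /Dsum -big_split; apply: eq_bigr => i _; rewrite mderivD. Qed.

Lemma DsumN p : Dsum (- p) = - Dsum p.
Proof. by rewrite /Dsum -sumrN; apply: eq_bigr => i _; rewrite mderivN. Qed.

Lemma DsumM p q : Dsum (p * q) = Dsum p * q + p * Dsum q.
Proof.
rewrite /Dsum mulr_suml mulr_sumr -big_split; apply: eq_bigr => i _.
by rewrite mderivM.
Qed.

Lemma DsumX i : Dsum ('X_i) = 1.
Proof.
rewrite /Dsum (bigD1 i) //= big1 ?addr0 => [|j /negPf ji].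
  rewrite mderivX mnm1E eqxx (_ : (U_(i) - U_(i))%MM = 0%MM) ?mpolyX0 ?scale1r //.
  by apply/mnmP => k; rewrite mnmBE subnn mnm0E.
rewrite (@mderivX _ _ j U_(i)%MM) mnm1E eq_sym ji. by rewrite scale0r.
Qed.

Lemma DsumXB i j : Dsum ('X_i - 'X_j) = 0.
Proof. by rewrite DsumD DsumN !DsumX subrr. Qed.

Lemma DsumM0 p q : Dsum p = 0 -> Dsum q = 0 -> Dsum (p * q) = 0.
Proof. by move=> hp hq; rewrite DsumM hp hq mul0r mulr0 addr0. Qed.

Lemma DsumX0 p k : Dsum p = 0 -> Dsum (p ^+ k) = 0.
Proof.
move=> hp; elim: k => [|k IH]; last by rewrite exprS DsumM0.
rewrite expr0 /Dsum big1 // => i _; exact: (mderivC i 1).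
Qed.

Definition phi P h := \sum_(M <- msupp P) (mfact M)%:R * P@_M * h@_M.

Lemma phiD P h1 h2 : phi P (h1 + h2) = phi P h1 + phi P h2.
Proof. by rewrite /phi -big_split; apply: eq_bigr => M _; rewrite mcoeffD mulrDr. Qed.

Lemma phiZ P c h : phi P (c *: h) = c * phi P h.
Proof.
rewrite /phi mulr_sumr; apply: eq_bigr => M _; rewrite mcoeffZ.
by rewrite mulrCA.
Qed.

Lemma phiN P h : phi P (- h) = - phi P h.
Proof. by rewrite -scaleN1r phiZ mulN1r. Qed.

Lemma phi_sum P (I : Type) (r : seq I) (Q : pred I) (Ff : I -> {mpoly F[n]}) :
  phi P (\sum_(i <- r | Q i) Ff i) = \sum_(i <- r | Q i) phi P (Ff i).
Proof.
elim: r => [|i r IH]; rewrite ?big_nil ?big_cons.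
  by rewrite /phi big1 // => M _; rewrite mcoeff0 mulr0.
by case: (Q i); rewrite ?phiD IH.
Qed.

Lemma phiX P M : phi P 'X_[M] = (mfact M)%:R * P@_M.
Proof.
rewrite /phi; have [Min|Mnin] := boolP (M \in msupp P).
  rewrite (bigD1_seq M) ?msupp_uniq //= mcoeffX eqxx mulr1 big1 ?addr0 //.
  by move=> M' /negPf; rewrite mcoeffX eq_sym => ->; rewrite mulr0.
move: (Mnin); rewrite -mcoeff_eq0 => /eqP ->; rewrite mulr0 big_seq big1 //.
move=> M' M'in; rewrite mcoeffX; case: eqP => [eM|]; last by rewrite mulr0.
by move: Mnin; rewrite eM M'in.
Qed.

Lemma phi_ideal P gens h :
  (forall M, M \in msupp P -> forall gm, gm \in gens -> ~~ (gm <= M)%MM) ->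
  Iin gens h -> phi P h = 0.
Proof.
move=> HP Ih; rewrite /phi big_seq big1 // => M Min.
by rewrite (Iin_coef0 Ih (HP M Min)) mulr0.
Qed.

Lemma phi_lin P f : Dsum P = 0 -> phi P (lin_form F n * f) = 0.
Proof.
move=> DP; rewrite (mpolyE f) mulr_sumr phi_sum big1 // => M _.
rewrite -scalerAr phiZ; apply/eqP; rewrite mulf_eq0; apply/orP; right.
rewrite /lin_form mulr_suml phi_sum.
have E i : phi P ('X_i * 'X_[M]) = (mfact M)%:R * (P@_(M + U_(i)) *+ (M i).+1).
  by rewrite -mpolyXD phiX addmC mfactU natrM -mulrA; congr (_ * _); exact: mulr_natl.
rewrite (eq_bigr _ (fun i _ => E i)).
rewrite -mulr_sumr mulf_eq0; apply/orP; right.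
have -> : \sum_(i < n) (P@_(M + U_(i)) *+ (M i).+1) = (Dsum P)@_M.
  by rewrite /Dsum raddf_sum; apply: eq_bigr => i _ /=; rewrite mcoeff_deriv.
by rewrite DP mcoeff0.
Qed.

Section Weights.
Local Open Scope nat_scope.

Definition wt (w : 'I_n -> nat) M := \sum_i w i * M i.

Lemma wtD w M1 M2 : wt w (M1 + M2)%MM = wt w M1 + wt w M2.
Proof. by rewrite /wt -big_split; apply: eq_bigr => i _; rewrite mnmDE mulnDr. Qed.

Lemma wt0 w : wt w 0%MM = 0.
Proof. by rewrite /wt big1 // => i _; rewrite mnm0E muln0. Qed.

Lemma wtU w i : wt w U_(i)%MM = w i.
Proof.
rewrite /wt (bigD1 i) //= mnm1E eqxx muln1 big1 ?addn0 // => j /negPf ji.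
by rewrite mnm1E eq_sym ji muln0.
Qed.

Lemma wt_le w M1 M2 : (M1 <= M2)%MM -> wt w M1 <= wt w M2.
Proof. by move/mnm_lepP => H; apply: leq_sum => i _; rewrite leq_mul2l H orbT. Qed.

Definition WB w k p := forall M, M \in msupp p -> wt w M <= k.

Lemma WB_mul w k1 k2 p q : WB w k1 p -> WB w k2 q -> WB w (k1 + k2) (p * q).
Proof.
move=> h1 h2 M /msuppM_le /allpairsP [[m1 m2] /= [m1in m2in ->]].
by rewrite wtD leq_add ?h1 ?h2.
Qed.

Lemma WB_exp w k p e : WB w k p -> WB w (k * e) (p ^+ e).
Proof.
move=> h; elim: e => [|e IH]; last by rewrite exprS mulnS; apply: WB_mul.
by rewrite expr0 muln0 => M; rewrite msupp1 inE => /eqP ->; rewrite wt0.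
Qed.

Lemma WB_XB w i j : WB w (maxn (w i) (w j)) ('X_i - 'X_j).
Proof.
move=> M /msuppB_le; rewrite mem_cat !msuppX !inE => /orP[] /eqP ->; rewrite wtU.
  exact: leq_maxl.
exact: leq_maxr.
Qed.

Lemma WB_le w k1 k2 p : k1 <= k2 -> WB w k1 p -> WB w k2 p.
Proof. by move=> le h M /h /leq_trans; apply. Qed.

End Weights.

Section Constr.
Local Open Scope nat_scope.
Variables (d : nat) (a b z : 'I_n).
Hypotheses (hd : 2 <= d) (ab : a != b) (az : a != z) (bz : b != z).

Definition gens1 := [seq (U_(i) *+ d)%MM | i <- enum 'I_n].
Definition gens3 := [seq (U_(j) + U_(z) *+ (d-1))%MM | j <- enum 'I_n & j \notin [:: a; b; z]].
Definition gens : seq 'X_{1..n} := gens1 ++ (U_(a) *+ (d-1) + U_(b))%MM :: gens3.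

Lemma mem_gens gm : gm \in gens ->
  [\/ exists i, gm = (U_(i) *+ d)%MM, gm = (U_(a) *+ (d-1) + U_(b))%MM |
     exists2 j, j \notin [:: a; b; z] & gm = (U_(j) + U_(z) *+ (d-1))%MM].
Proof.
rewrite mem_cat inE => /orP[/mapP[i _ ->]|/orP[/eqP->|]].
- by constructor 1; exists i.
- by constructor 2.
- by move=> /mapP[j]; rewrite mem_filter => /andP[jn _] ->; constructor 3; exists j.
Qed.

Lemma no_gen M : (forall i, M i < d) -> ~~ ((d - 1 <= M a) && (1 <= M b)) ->
  (forall j, j \notin [:: a; b; z] -> (M j == 0) || (M z < d - 1)) ->
  forall gm, gm \in gens -> ~~ (gm <= M)%MM.
Proof.
move=> h1 h2 h3 gm /mem_gens [[i ->]|->|[j jn ->]]; apply/negP => /mnm_lepP H.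
- by move: (H i) (h1 i); rewrite mulmnE mnm1E eqxx mul1n; lia.
- move: (H a) (H b) h2; rewrite !mnmDE !mulmnE !mnm1E eqxx (negPf ab) eq_sym (negPf ab) eqxx /=; lia.
- have jz : (j == z) = false by move: jn; rewrite !inE; case: (j == z); rewrite ?orbT.
  move: (H j) (H z) (h3 j jn); rewrite !mnmDE !mulmnE !mnm1E !eqxx mul1n jz eq_sym jz /=.
  case: eqP => [->|_] /=; lia.
Qed.

Lemma sizeF (P : pred 'I_n) : size [seq j <- enum 'I_n | P j] = #|P|.
Proof.
rewrite cardE /enum_mem -filter_predI; congr size; apply: eq_filter => x /=.
by rewrite andbT.
Qed.

Lemma jnP j : j \notin [:: a; b; z] -> [/\ (j == a) = false, (j == b) = false & (j == z) = false].
Proof. by rewrite !inE; case: (j == a); case: (j == b); case: (j == z). Qed.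

Lemma size_gens : size gens = 2 * n - 2.
Proof.
rewrite size_cat /= size_map size_enum_ord size_map sizeF.
have u3 : uniq [:: a; b; z] by rewrite /= !inE negb_or ab az bz.
have := cardC (mem [:: a; b; z]); rewrite (card_uniqP u3) card_ord /=.
rewrite (@eq_card _ _ [predC [:: a; b; z]]) //; lia.
Qed.

Lemma uniq_gens : uniq gens.
Proof.
rewrite cat_uniq /= !negb_or -!andbA; apply/and5P; split.
- rewrite map_inj_uniq ?enum_uniq // => i j /mnmP /(_ i).
  rewrite !mulmnE !mnm1E eqxx; case: eqP => // _; lia.
- apply/mapP => [[i _ /mnmP /(_ b)]]; rewrite !mnmDE !mulmnE !mnm1E eqxx (negPf ab).
  case: eqP => _; lia.
- apply/hasPn => g /mapP [j]; rewrite mem_filter => /andP [/jnP [ja jb jz] _] -> {g}.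
  apply/mapP => [[i _ /mnmP /(_ j)]]; rewrite !mnmDE !mulmnE !mnm1E eqxx eq_sym jz.
  case: eqP => _; lia.
- apply/mapP => [[j]]; rewrite mem_filter => /andP [/jnP [ja jb jz] _] /mnmP /(_ b).
  rewrite !mnmDE !mulmnE !mnm1E eqxx (negPf ab) jb (eq_sym z b) (negPf bz); lia.
- rewrite map_inj_in_uniq; first by apply: filter_uniq; exact: enum_uniq.
  move=> i j.
  rewrite !mem_filter => /andP [/jnP [_ _ iz] _] /andP [/jnP [_ _ jz] _] /mnmP /(_ i).
  rewrite !mnmDE !mulmnE !mnm1E eqxx eq_sym iz; case: eqP => // _; lia.
Qed.

Lemma mdeg_gens : all (fun m => mdeg m == d) gens.
Proof.
apply/allP => gm /mem_gens [[i ->]|->|[j _ ->]]; rewrite ?mdegD ?mdegMn ?mdeg1; apply/eqP; lia.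
Qed.

Lemma le_mdeg_eq (g1 g2 : 'X_{1..n}) : (g1 <= g2)%MM -> mdeg g1 = mdeg g2 -> g1 = g2.
Proof.
move=> le eqd; have E := submK le.
have : mdeg (g2 - g1)%MM == 0 by move: (congr1 mdeg E); rewrite mdegD eqd; lia.
by rewrite mdeg_eq0 => /eqP E0; rewrite -E E0 add0m.
Qed.

Lemma mem_drop_at (T : eqType) (s : seq T) j x : x \in drop_at s j -> x \in s.
Proof.
by rewrite /drop_at mem_cat => /orP[/mem_take|/mem_drop].
Qed.

Lemma nth_notin_drop_at (T : eqType) (x0 : T) (s : seq T) j :
  uniq s -> j < size s -> nth x0 s j \notin drop_at s j.
Proof.
move=> us js; move: us; rewrite -{1}(cat_take_drop j s) (drop_nth x0 js).
rewrite /drop_at cat_uniq /= => /and4P [_ H1 H2 _]; rewrite mem_cat negb_or H2 andbT.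
by move: H1; rewrite negb_or => /andP[].
Qed.

Lemma minimal_gens_ok : minimal_gens F gens.
Proof.
move=> j /IinP Ij; have := Iin_coef0 Ij (M := nth 0%MM gens j).
rewrite mcoeffX eqxx => H.
suff: (true%:R : F) = 0%R by move/eqP; rewrite oner_eq0.
apply: H => gm gin; apply/negP => le.
have gin' := mem_drop_at gin.
have nin : nth 0%MM gens j \in gens by apply: mem_nth.
move/allP: mdeg_gens => Hd; move: (Hd _ gin') (Hd _ nin) => /eqP e1 /eqP e2.
have E := le_mdeg_eq le (etrans e1 (esym e2)).
by move: (nth_notin_drop_at 0%MM uniq_gens (ltn_ord j)); rewrite -E gin.
Qed.

Lemma gen_pure i : (U_(i) *+ d)%MM \in gens.
Proof. by rewrite mem_cat (map_f (fun i => U_(i) *+ d)%MM) ?mem_enum. Qed.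

Lemma gen_mixed1 : (U_(a) *+ (d-1) + U_(b))%MM \in gens.
Proof. by rewrite mem_cat inE eqxx orbT. Qed.

Lemma gen_mixed3 j : j \notin [:: a; b; z] -> (U_(j) + U_(z) *+ (d-1))%MM \in gens.
Proof.
move=> jn; rewrite mem_cat inE (map_f (fun j => U_(j) + U_(z) *+ (d-1))%MM) ?orbT //.
by rewrite mem_filter jn mem_enum.
Qed.

Lemma artinian_ok : artinian_quot F gens.
Proof.
exists (n * (d - 1)).+1 => m hm; apply/IinP.
case: (boolP [exists i, d <= m i]) => [/existsP [i hi]|].
  apply: (IinX (gen_pure i)); apply/mnm_lepP => k; rewrite mulmnE mnm1E.
  by case: eqP => [<-|_]; rewrite ?mul1n ?mul0n.
rewrite negb_exists => /forallP H; exfalso; move: hm.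
have : mdeg m <= n * (d - 1).
  rewrite mdegE (@leq_trans (\sum_(i : 'I_n) (d - 1))) //.
    by apply: leq_sum => i _; move: (H i); rewrite -ltnNge; lia.
  by rewrite sum_nat_const card_ord.
lia.
Qed.

Definition m0 : 'X_{1..n} := (U_(a) *+ (d-1) + U_(z) *+ (d-1))%MM.

Lemma not_injective : ~ mult_injective_in F gens (2 * d - 2).
Proof.
move=> H; have := H 'X_[m0].
have hom : ('X_[m0] : {mpoly F[n]}) \is (2 * d - 2).-homog.
  rewrite dhomogX /m0 /= mdegD !mdegMn !mdeg1; apply/eqP; lia.
have Il : in_mon_ideal gens (lin_form F n * 'X_[m0]).
  apply/IinP; rewrite /lin_form mulr_suml; apply: Iin_sum => i _; rewrite -mpolyXD.
  have [->|ia] := eqVneq i a.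
    apply: (IinX (gen_pure a)); apply/mnm_lepP => k; rewrite !mnmDE !mulmnE !mnm1E.
    case: eqP => [<-|_]; lia.
  have [->|iz] := eqVneq i z.
    apply: (IinX (gen_pure z)); apply/mnm_lepP => k; rewrite !mnmDE !mulmnE !mnm1E.
    case: eqP => [<-|_]; lia.
  have [->|ib] := eqVneq i b.
    apply: (IinX gen_mixed1); apply/mnm_lepP => k; rewrite !mnmDE !mulmnE !mnm1E.
    case: (a == k); case: (b == k); lia.
  have jn : i \notin [:: a; b; z] by rewrite !inE (negPf ia) (negPf ib) (negPf iz).
  apply: (IinX (gen_mixed3 jn)); apply/mnm_lepP => k; rewrite !mnmDE !mulmnE !mnm1E.
  case: (i == k); case: (z == k); lia.
move=> /(_ hom Il) /IinP I0.
have := Iin_coef0 I0 (M := m0); rewrite mcoeffX eqxx => H0.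
suff: (true%:R : F) = 0%R by move/eqP; rewrite oner_eq0.
apply: H0; apply: no_gen.
- move=> i; rewrite /m0 mnmDE !mulmnE !mnm1E.
  case: (eqVneq a i) => [<-|_]; first by rewrite (eq_sym z a) (negPf az); lia.
  case: eqP => _; lia.
- rewrite /m0 !mnmDE !mulmnE !mnm1E (negPf ab) (eq_sym z b) (negPf bz); lia.
- move=> j /jnP [ja jb jz]; rewrite /m0 !mnmDE !mulmnE !mnm1E (eq_sym a) ja (eq_sym z) jz.
  by rewrite !mul0n.
Qed.

Variable P : {mpoly F[n]}.
Hypotheses (HPh : P \is (2 * d - 1).-homog) (HP0 : P != 0%R) (HD : Dsum P = 0%R)
  (HS : forall M, M \in msupp P -> [/\ forall i, M i < d, M a + M b < d & M z < d - 1]).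
Hypothesis (ch : [pchar F] =i pred0).

Lemma not_surjective : ~ mult_surjective_in F gens (2 * d - 2).
Proof.
move=> H; have M0in := mlead_supp HP0; set M0 := mlead P in M0in.
have hom : ('X_[M0] : {mpoly F[n]}) \is (2 * d - 2).+1.-homog.
  by rewrite dhomogX (dhomog_mf HPh M0in); apply/eqP; lia.
have [f _ If] := H _ hom; move/IinP: If => If.
have : phi P ('X_[M0] - lin_form F n * f) = 0%R.
  apply: phi_ideal If => M /HS [h1 h2 h3]; apply: no_gen => //.
    by apply/negP => /andP; lia.
  by move=> j _; rewrite h3 orbT.
rewrite phiD phiN phi_lin // subr0 phiX => /eqP; rewrite mulf_eq0.
apply/negP; rewrite negb_or; apply/andP; split; last by rewrite mcoeff_eq0 negbK.
move/pcharf0P: ch => ->; rewrite -lt0n /mfact prodn_gt0 // => i; exact: fact_gt0.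
Qed.

End Constr.
Section Polys.
Local Open Scope nat_scope.

Definition XB (i j : 'I_n) : {mpoly F[n]} := 'X_i - 'X_j.

Lemma XB_homog i j : XB i j \is 1.-homog.
Proof. by rewrite /XB rpredB // dhomogX /= mdeg1. Qed.

Lemma XB_neq0 i j : i != j -> XB i j != 0%R.
Proof.
move=> ij; apply/eqP => /(congr1 (mcoeff U_(i)%MM)).
rewrite /XB mcoeffB !mcoeffX eqxx mcoeff0.
have -> : (U_(j) == U_(i))%MM = false.
  apply/negP => /eqP /mnmP /(_ i); rewrite !mnm1E eqxx eq_sym (negPf ij) //.
by rewrite subr0 => /eqP; rewrite oner_eq0.
Qed.

Lemma XB_D i j : Dsum (XB i j) = 0%R.
Proof. exact: DsumXB. Qed.

Definition ew (k : nat) (j : 'I_n) : nat := (val j == k).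

Lemma wt_ew (i : 'I_n) M : wt (ew (val i)) M = M i.
Proof.
rewrite /wt (bigD1 i) //= /ew eqxx mul1n big1 ?addn0 // => j ji.
by rewrite (_ : (val j == val i) = false) ?mul0n //; apply/negP => /eqP /val_inj /eqP; rewrite (negPf ji).
Qed.

Lemma wt_add w1 w2 M : wt (fun j => w1 j + w2 j) M = wt w1 M + wt w2 M.
Proof. by rewrite /wt -big_split; apply: eq_bigr => i _; rewrite mulnDl. Qed.

Lemma ne_val (i j : 'I_n) : val i != val j -> i != j.
Proof. by apply: contra => /eqP ->. Qed.

Definition Pgood d (a b z : 'I_n) (P : {mpoly F[n]}) :=
  [/\ P \is (2 * d - 1).-homog, P != 0%R, Dsum P = 0%R &
      forall M, M \in msupp P -> [/\ forall i, M i < d, M a + M b < d & M z < d - 1]].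

Lemma P5_ok d (a b c3 c4 c5 z : 'I_n) : val a = 0 -> val b = 1 -> val c3 = 2 ->
  val c4 = 3 -> val c5 = 4 -> val z = n.-1 -> 4 <= n.-1 -> 4 <= d ->
  exists P, Pgood d a b z P.
Proof.
move=> ha hb h3 h4 h5 hz hn hd.
exists (XB a b ^+ (d-1) * XB c3 c4 ^+ (d-2) * XB c3 c5 * XB c4 c5)%R; split.
- have := dhomogM (dhomogM (dhomogM (dhomogMn (d-1) (XB_homog a b))
     (dhomogMn (d-2) (XB_homog c3 c4))) (XB_homog c3 c5)) (XB_homog c4 c5).
  by have -> : 1 * (d - 1) + 1 * (d - 2) + 1 + 1 = 2 * d - 1 by lia.
- rewrite !mulf_neq0 ?expf_neq0 ?XB_neq0 // ne_val // ?ha ?hb ?h3 ?h4 ?h5 //.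
- by rewrite !DsumM0 ?DsumX0 ?XB_D.
have WBP w : WB w (maxn (w a) (w b) * (d-1) + maxn (w c3) (w c4) * (d-2)
     + maxn (w c3) (w c5) + maxn (w c4) (w c5))
   (XB a b ^+ (d-1) * XB c3 c4 ^+ (d-2) * XB c3 c5 * XB c4 c5)%R.
  by apply: WB_mul; [apply: WB_mul; [apply: WB_mul; apply: WB_exp|]|]; apply: WB_XB.
move=> M Min; split.
- move=> i; have := WBP (ew (val i)) M Min; rewrite wt_ew /ew ha hb h3 h4 h5.
  by case: (val i) => [|[|[|[|[|k]]]]] /=; lia.
- have := WBP (fun j => ew 0 j + ew 1 j) M Min.
  rewrite wt_add -{1}ha -{1}hb !wt_ew /ew ha hb h3 h4 h5 /=; lia.
- have := WBP (ew (val z)) M Min; rewrite wt_ew /ew ha hb h3 h4 h5 hz.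
  move: hn; case: n.-1 => [|[|[|[|[|k]]]]] /=; lia.
Qed.

Lemma P6_ok d (a b c3 c4 c5 c6 z : 'I_n) : val a = 0 -> val b = 1 -> val c3 = 2 ->
  val c4 = 3 -> val c5 = 4 -> val c6 = 5 -> val z = n.-1 -> 5 <= n.-1 -> 2 <= d ->
  (n.-1 = 5 -> 3 <= d) ->
  exists P, Pgood d a b z P.
Proof.
move=> ha hb h3 h4 h5 h6 hz hn hd hd3.
exists (XB a b ^+ (d-1) * XB c3 c4 ^+ (d-1) * XB c5 c6)%R; split.
- have := dhomogM (dhomogM (dhomogMn (d-1) (XB_homog a b))
     (dhomogMn (d-1) (XB_homog c3 c4))) (XB_homog c5 c6).
  by have -> : 1 * (d - 1) + 1 * (d - 1) + 1 = 2 * d - 1 by lia.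
- rewrite !mulf_neq0 ?expf_neq0 ?XB_neq0 // ne_val // ?ha ?hb ?h3 ?h4 ?h5 ?h6 //.
- by rewrite !DsumM0 ?DsumX0 ?XB_D.
have WBP w : WB w (maxn (w a) (w b) * (d-1) + maxn (w c3) (w c4) * (d-1)
     + maxn (w c5) (w c6))
   (XB a b ^+ (d-1) * XB c3 c4 ^+ (d-1) * XB c5 c6)%R.
  by apply: WB_mul; [apply: WB_mul; apply: WB_exp|]; apply: WB_XB.
move=> M Min; split.
- move=> i; have := WBP (ew (val i)) M Min; rewrite wt_ew /ew ha hb h3 h4 h5 h6.
  by case: (val i) => [|[|[|[|[|[|k]]]]]] /=; lia.
- have := WBP (fun j => ew 0 j + ew 1 j) M Min.
  rewrite wt_add -{1}ha -{1}hb !wt_ew /ew ha hb h3 h4 h5 h6 /=; lia.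
- have := WBP (ew (val z)) M Min; rewrite wt_ew /ew ha hb h3 h4 h5 h6 hz.
  move: hn hd3; case: n.-1 => [|[|[|[|[|[|k]]]]]] /=; lia.
Qed.

End Polys.

End Gen.

Theorem lemma4p5 (F : fieldType) (n d : nat) :
  [pchar F] =i pred0 ->
  [\/ (5 <= n /\ 4 <= d)%N, (6 <= n /\ 3 <= d)%N | (7 <= n /\ 2 <= d)%N] ->
  exists gens : seq 'X_{1..n},
    [/\ size gens = (2 * n - 2)%N,
        all (fun m => mdeg m == d) gens,
        minimal_gens F gens,
        artinian_quot F gens
      & fails_WLP_in F gens (2 * d - 2)].
Proof.
move=> ch H.
have hd : (2 <= d)%N by case: H => -[]; lia.
have hn : (5 <= n)%N by case: H => -[]; lia.
have h0 : (0 < n)%N by lia.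
have h1 : (1 < n)%N by lia.
have h2 : (2 < n)%N by lia.
have h3 : (3 < n)%N by lia.
have h4 : (4 < n)%N by lia.
have hz : (n.-1 < n)%N by lia.
pose a := Ordinal h0; pose b := Ordinal h1; pose z := Ordinal hz.
have ab : a != b by apply: (@ne_val n a b).
have az : a != z by apply: (@ne_val n a z) => /=; apply/eqP; lia.
have bz : b != z by apply: (@ne_val n b z) => /=; apply/eqP; lia.
have : exists P : {mpoly F[n]}, Pgood d a b z P.
  case: (leqP 4 d) => hd4.
    by apply: (@P5_ok F n d a b (Ordinal h2) (Ordinal h3) (Ordinal h4) z) => //=; lia.
  have h5 : (5 < n)%N by case: H => -[]; lia.
  apply: (@P6_ok F n d a b (Ordinal h2) (Ordinal h3) (Ordinal h4) (Ordinal h5) z) => //=; try lia.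
  by move=> e; case: H => -[]; lia.
case=> P; rewrite /Pgood => -[HP1 HP2 HP3 HP4].
exists (gens d a b z); split.
- exact: size_gens.
- exact: mdeg_gens.
- exact: minimal_gens_ok.
- exact: artinian_ok.
- split; first exact: not_injective.
  exact: (not_surjective hd ab az bz HP1 HP2 HP3 HP4 ch).
Qed.
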